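(* Let $K=\mathbb{F}_{q^n}$, let $\sigma$ be an automorphism of $K$ of order $n>1$ with fixed field $F=\mathbb{F}_q$, and let $f\in K[t;\sigma]$ be monic of degree $m\ge 2$, irreducible and not right-invariant, with $n\ge m-1$. Suppose the multiplicative loop $L_f$ of $S_f$ has nucleus $K^\times\cdot 1$. Then $|\{T_c\in\mathrm{Inn}(L_f)\,:\, T_c \text{ is an automorphism of } L_f\}|\ge \frac{q^n-1}{q-1}.$
   Context: $R=K[t;\sigma]$ is the twisted polynomial ring ($tb=\sigma(b)t$ for $b\in K$). $f$ is irreducible if it has no factorization into two factors of smaller degree; right-invariant if $Rf$ is a two-sided ideal. $S_f$ is the set of elements of $R$ of degree $<m$ with multiplication $g\circ h=gh\bmod_r f$ (remainder of right division by $f$), a proper semifield; $L_f=S_f\setminus\{0\}$ is its multiplicative loop. The nucleus of a loop $L$ is the set of $x$ with $(xy)z=x(yz)$, $(yx)z=y(xz)$, $(yz)x=y(zx)$ for all $y,z\in L$. For $x\in L$, $L_x(y)=xy$, $R_x(y)=yx$, and $T_x=L_x^{-1}R_x$ is the middle inner mapping; $\mathrm{Mlt}(L)$ is the group generated by all $L_x,R_x$ and $\mathrm{Inn}(L)=\{g\in\mathrm{Mlt}(L):g(1)=1\}$. *)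

(* Defs.v *)
From HB Require Import structures.
From mathcomp Require Import all_boot all_order all_algebra.
Set Implicit Arguments. Unset Strict Implicit. Unset Printing Implicit Defensive.
Import GRing.Theory.
Local Open Scope ring_scope.

(* Twisted polynomial ring R = K[t; sigma], represented on the carrier {poly K}:
   sum a_i t^i  ~  sum a_i 'X^i, with the twisted multiplication
   (a t^i) * (sum_j b_j t^j) = sum_j a sigma^i(b_j) t^(i+j). *)
Section Skew.
Variable K : fieldType.
Variable sigma : K -> K.

Definition skmul (p r : {poly K}) : {poly K} :=
  \sum_(i < size p) (p`_i *: ('X^i * map_poly (iter i sigma) r)).

(* remainder of RIGHT division by a monic f: g = h f + r, size r < size f.
   Each step subtracts (lead g) t^(deg g - deg f) f, which (f monic) kills
   the leading term of g. *)
Fixpoint skmod_rec (f : {poly K}) (k : nat) (g : {poly K}) : {poly K} :=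
  if k is k'.+1 then
    if (size g < size f)%N then g
    else skmod_rec f k' (g - skmul (lead_coef g *: 'X^(size g - size f)) f)
  else g.

Definition skmodr (g f : {poly K}) : {poly K} := skmod_rec f (size g) g.

Definition sk_irreducible (f : {poly K}) : Prop :=
  forall g h : {poly K}, f = skmul g h ->
    ~ ((size g < size f)%N /\ (size h < size f)%N).

(* R f is a two-sided ideal (it is always a left ideal): closed under right
   multiplication by elements of R. *)
Definition right_invariant (f : {poly K}) : Prop :=
  forall a g : {poly K}, exists h : {poly K}, skmul (skmul a f) g = skmul h f.
End Skew.

Section Loop.
Variable K : finFieldType.
Variable sigma : K -> K.
Variable m : nat.
Variable f : {poly K}.

(* S_f = polynomials of degree < m, encoded by their coefficient row vector *)
Definition Sf := 'rV[K]_m.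
Definition pol (v : Sf) : {poly K} := \sum_(i < m) (v ord0 i *: 'X^i).
Definition vec (p : {poly K}) : Sf := \row_(i < m) p`_i.

Definition Smul (u v : Sf) : Sf := vec (skmodr sigma (skmul sigma (pol u) (pol v)) f).

Definition Lf := {v : Sf | v != 0}.

(* multiplication of L_f (the default x is only used if the product were 0,
   which does not happen as S_f is a semifield) *)
Definition Lmul (x y : Lf) : Lf := insubd x (Smul (val x) (val y)).

Definition Lleft (x : Lf) : Lf -> Lf := fun y => Lmul x y.
Definition Lright (x : Lf) : Lf -> Lf := fun y => Lmul y x.

Definition finvp (h : Lf -> Lf) (y : Lf) : Lf := odflt y [pick z | h z == y].

Definition Tmid (x : Lf) : {ffun Lf -> Lf} :=
  [ffun y => finvp (Lleft x) (Lright x y)].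

(* Mlt(L): group generated by all L_x, R_x (finite: closure of the identity
   under left composition with generators and their inverses) *)
Inductive in_Mlt : {ffun Lf -> Lf} -> Prop :=
| Mlt_id : in_Mlt [ffun y => y]
| Mlt_L x g : in_Mlt g -> in_Mlt [ffun y => Lleft x (g y)]
| Mlt_R x g : in_Mlt g -> in_Mlt [ffun y => Lright x (g y)]
| Mlt_Linv x g : in_Mlt g -> in_Mlt [ffun y => finvp (Lleft x) (g y)]
| Mlt_Rinv x g : in_Mlt g -> in_Mlt [ffun y => finvp (Lright x) (g y)].

Definition is_one (x : Lf) : Prop := val x = vec 1.

Definition in_Inn (g : {ffun Lf -> Lf}) : Prop :=
  in_Mlt g /\ forall u : Lf, is_one u -> g u = u.

Definition is_loop_aut (g : {ffun Lf -> Lf}) : Prop :=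
  bijective g /\ forall x y : Lf, g (Lmul x y) = Lmul (g x) (g y).

Definition in_nucleus (x : Lf) : Prop :=
  forall y z : Lf,
    [/\ Lmul (Lmul x y) z = Lmul x (Lmul y z),
        Lmul (Lmul y x) z = Lmul y (Lmul x z) &
        Lmul (Lmul y z) x = Lmul y (Lmul z x)].

Definition nucleus_is_scalars : Prop :=
  forall x : Lf, in_nucleus x <-> exists c : K, c != 0 /\ val x = vec c%:P.
End Loop.

(* Main.v *)
Require Import Defs.
From HB Require Import structures.
From mathcomp Require Import all_boot all_order all_algebra.
Import GRing.Theory.
Local Open Scope ring_scope.

Section Aux.
Variable K : finFieldType.
Variable sigma : {rmorphism K -> K}.
Variable m : nat.
Variable f : {poly K}.
Hypothesis hf : size f = m.+1.
Hypothesis m_gt0 : (0 < m)%N.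

Lemma coef_pol (v : Sf K m) (j : 'I_m) : (pol v)`_j = v ord0 j.
Proof.
by rewrite /pol coef_sumMXn (big_pred1 j).
Qed.

Lemma coef_pol0 (v : Sf K m) j : (m <= j)%N -> (pol v)`_j = 0.
Proof.
move=> hj; rewrite /pol coef_sumMXn big_pred0 // => i; apply/negbTE.
by apply/eqP => ei; move: (ltn_ord i); rewrite ei ltnNge hj.
Qed.

Lemma size_pol (v : Sf K m) : (size (pol v) <= m)%N.
Proof. by apply/leq_sizeP => j hj; rewrite coef_pol0. Qed.

Lemma vec_pol (v : Sf K m) : vec m (pol v) = v.
Proof. by apply/rowP => j; rewrite mxE coef_pol. Qed.

Lemma pol_vecC (c : K) : pol (vec m c%:P) = c%:P.
Proof.
apply/polyP => j; case: (ltnP j m) => hj.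
  by rewrite (coef_pol _ (Ordinal hj)) mxE.
by rewrite coef_pol0 // coefC; case: j hj => //; rewrite leqn0 => /eqP E; move: m_gt0; rewrite E.
Qed.

Lemma iter0 i : iter i sigma 0 = 0.
Proof. by elim: i => //= i ->; rewrite rmorph0. Qed.

Lemma iter_eq0 i c : (iter i sigma c == 0) = (c == 0).
Proof. by elim: i => //= i <-; rewrite fmorph_eq0. Qed.

Lemma skmul_Cl c p : c != 0 -> skmul sigma c%:P p = c *: p.
Proof.
move=> hc; rewrite /skmul size_polyC hc big_ord1 /= expr0 mul1r coefC /=.
by rewrite map_poly_id.
Qed.

Lemma skmul_Cr p c : skmul sigma p c%:P = \poly_(i < size p) (p`_i * iter i sigma c).
Proof.
rewrite poly_def; apply: eq_bigr => i _.
have -> : map_poly (iter i sigma) c%:P = (iter i sigma c)%:P.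
  by apply/polyP => j; rewrite coef_map_id0 ?iter0 // !coefC; case: (j == 0) => //; rewrite iter0.
by rewrite mulrC mul_polyC scalerA.
Qed.

Lemma skmodr_small (g : {poly K}) : (size g <= m)%N -> skmodr sigma g f = g.
Proof.
move=> hg; rewrite /skmodr; case E: (size g) => [|k] //=.
by rewrite E hf ltnS -E hg.
Qed.

Lemma vecZ (c : K) p : vec m (c *: p) = c *: vec m p.
Proof. by apply/rowP => j; rewrite !mxE coefZ. Qed.

Lemma vecC_neq0 (c : K) : c != 0 -> vec m c%:P != 0.
Proof.
move=> hc; apply/eqP => /rowP/(_ (Ordinal m_gt0)); rewrite !mxE coefC /=.
by move/eqP; rewrite (negbTE hc).
Qed.

Definition L1 : Lf K m := exist _ (vec m 1%:P) (@vecC_neq0 1 (oner_neq0 K)).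
Definition mkL (c : K) : Lf K m := insubd L1 (vec m c%:P).

Lemma mkLE c : c != 0 -> val (mkL c) = vec m c%:P.
Proof. by move=> hc; rewrite /mkL insubdK //; exact: vecC_neq0. Qed.

Lemma LmulCl c (y : Lf K m) : c != 0 -> val (Lmul sigma f (mkL c) y) = c *: val y.
Proof.
move=> hc; rewrite /Lmul /Smul mkLE // pol_vecC skmul_Cl //.
rewrite skmodr_small; last exact: leq_trans (size_scale_leq _ _) (size_pol _).
rewrite vecZ vec_pol insubdK //.
by rewrite unfold_in /= scaler_eq0 negb_or hc; case: y.
Qed.

Lemma LmulCr c (y : Lf K m) : c != 0 ->
  val (Lmul sigma f y (mkL c)) = \row_(i < m) (val y ord0 i * iter i sigma c).
Proof.
move=> hc; rewrite /Lmul /Smul mkLE // pol_vecC skmul_Cr.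
rewrite skmodr_small; last exact: leq_trans (size_poly _ _) (size_pol _).
have -> : vec m (\poly_(i < size (pol (val y))) ((pol (val y))`_i * iter i sigma c))
    = \row_(i < m) (val y ord0 i * iter i sigma c).
  apply/rowP => j; rewrite !mxE coef_poly coef_pol.
  case: ifP => // hj; move: hj; rewrite ltnNge => /negbFE hj.
  by move/leq_sizeP: hj => /(_ j (leqnn _)); rewrite coef_pol => ->; rewrite mul0r.
rewrite insubdK // unfold_in /=.
case: y => v /= hv; apply: contra hv => /eqP h; apply/eqP/rowP => j.
move/rowP: h => /(_ j); rewrite !mxE => /eqP; rewrite mulf_eq0 iter_eq0 (negbTE hc) orbF.
by move/eqP.
Qed.


Lemma finvpC (c : K) (w : Lf K m) : c != 0 ->
  val (finvp (Lleft sigma f (mkL c)) w) = c^-1 *: val w.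
Proof.
move=> hc; have hw : c^-1 *: val w != 0.
  by rewrite scaler_eq0 invr_eq0 negb_or hc; case: w.
pose z0 : Lf K m := exist (fun v => v != 0) _ hw.
rewrite /finvp; case: pickP => [z /eqP hz | none].
  by rewrite /= -hz /Lleft LmulCl // scalerA mulVf // scale1r.
have := none z0; rewrite /Lleft.
suff -> : Lmul sigma f (mkL c) z0 = w by rewrite eqxx.
by apply/val_inj; rewrite LmulCl //= scalerA divff // scale1r.
Qed.

Lemma TmidE (c : K) y : c != 0 ->
  val (Tmid sigma f (mkL c) y) = c^-1 *: val (Lmul sigma f y (mkL c)).
Proof. by move=> hc; rewrite /Tmid ffunE finvpC. Qed.

Lemma TmidE2 (c : K) y : c != 0 ->
  Tmid sigma f (mkL c) y = Lmul sigma f (mkL c^-1) (Lmul sigma f y (mkL c)).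
Proof. by move=> hc; apply/val_inj; rewrite TmidE // LmulCl // invr_neq0. Qed.

Lemma Tmid_aut (c : K) : c != 0 -> in_nucleus sigma f (mkL c) ->
  in_nucleus sigma f (mkL c^-1) -> is_loop_aut sigma f (Tmid sigma f (mkL c)).
Proof.
move=> hc nC nD; split.
  apply: injF_bij => y1 y2 /(congr1 val); rewrite !TmidE //.
  move/(scalerI (invr_neq0 hc)); rewrite !LmulCr // => /rowP h.
  apply/val_inj/rowP => j; move: (h j); rewrite !mxE; apply: mulIf.
  by rewrite iter_eq0.
move=> x y; rewrite !TmidE2 //.
have [_ _ n3] := nC x y; rewrite n3.
have [n1 _ _] := nD (Lmul sigma f x (mkL c)) (Lmul sigma f (mkL c^-1) (Lmul sigma f y (mkL c))).
rewrite n1.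
have [_ n2 _] := nC x (Lmul sigma f (mkL c^-1) (Lmul sigma f y (mkL c))).
have CD : Lmul sigma f (mkL c) (Lmul sigma f (mkL c^-1) (Lmul sigma f y (mkL c)))
    = Lmul sigma f y (mkL c).
  by apply/val_inj; rewrite (LmulCl c) // (LmulCl c^-1) ?invr_neq0 // scalerA divff // scale1r.
by rewrite n2 CD.
Qed.

Lemma Tmid_inn (c : K) : c != 0 -> in_Inn sigma f (Tmid sigma f (mkL c)).
Proof.
move=> hc; split.
  have -> : Tmid sigma f (mkL c) = [ffun y => finvp (Lleft sigma f (mkL c))
       ([ffun y => Lright sigma f (mkL c) ([ffun y => y] y)] y)].
    by apply/ffunP => y; rewrite !ffunE.
  by apply: Mlt_Linv; apply: Mlt_R; apply: Mlt_id.
move=> u hu; apply/val_inj; rewrite TmidE // LmulCr // hu.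
apply/rowP => j; rewrite !mxE coefC; case: (nat_of_ord j) => [|k] /=.
  by rewrite mul1r mulVf.
by rewrite mul0r mulr0.
Qed.

Lemma Tmid_coef (c : K) y i : c != 0 ->
  val (Tmid sigma f (mkL c) y) ord0 i = c^-1 * (val y ord0 i * iter i sigma c).
Proof. by move=> hc; rewrite TmidE // LmulCr // !mxE. Qed.

Lemma Tmid_eq (c d : K) : (1 < m)%N -> c != 0 -> d != 0 ->
  Tmid sigma f (mkL c) = Tmid sigma f (mkL d) -> sigma (c / d) = c / d.
Proof.
move=> hm hc hd e.
have hX : vec m ('X : {poly K}) != 0.
  apply/eqP => /rowP/(_ (Ordinal hm)); rewrite !mxE coefX eqxx.
  by move/eqP; rewrite oner_eq0.
have [X hXv] : exists X : Lf K m, val X = vec m 'X by exists (exist (fun v => v != 0) _ hX).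
have h1 := Tmid_coef c X (Ordinal hm) hc.
have h2 := Tmid_coef d X (Ordinal hm) hd.
rewrite e in h1.
have e' := etrans (esym h1) h2.
move: e'; rewrite hXv !mxE coefX eqxx !mul1r /= => e'.
clear h1 h2 e hXv X hX.
have es : sigma c = c * (d^-1 * sigma d).
  by rewrite -e' mulrA divff // mul1r.
rewrite fmorph_div es mulrA mulfK //.
by rewrite fmorph_eq0.
Qed.

End Aux.

Theorem mainTheorem4 (K : finFieldType) (sigma : {rmorphism K -> K})
    (q n m : nat) (f : {poly K}) :
  bijective sigma ->
  (1 < n)%N ->
  (forall x : K, iter n sigma x = x) ->
  (forall k : nat, (0 < k < n)%N -> exists x : K, iter k sigma x != x) ->
  #|[set x : K | sigma x == x]| = q ->
  #|K| = (q ^ n)%N ->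
  f \is monic ->
  size f = m.+1 ->
  (2 <= m)%N ->
  sk_irreducible sigma f ->
  ~ right_invariant sigma f ->
  (m - 1 <= n)%N ->
  @nucleus_is_scalars K sigma m f ->
  exists s : seq {ffun Lf K m -> Lf K m},
    [/\ uniq s,
        ((q ^ n - 1) %/ (q - 1) <= size s)%N &
        forall T, T \in s ->
          [/\ exists c : Lf K m, T = Tmid sigma f c,
              in_Inn sigma f T &
              is_loop_aut sigma f T]].
Proof.
move=> _ _ _ _ hq hK _ hf hm2 _ _ _ hnuc.
have m_gt0 : (0 < m)%N by apply: leq_trans hm2.
have nuc : forall c : K, c != 0 -> in_nucleus sigma f (mkL K m m_gt0 c).
  move=> c hc; apply/hnuc; exists c; split; first exact: hc.
  exact: mkLE.
pose A := [set c : K | c != 0].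
pose g := fun c : K => Tmid sigma f (mkL K m m_gt0 c).
exists (enum (g @: A)); split.
- exact: enum_uniq.
- rewrite -cardE.
  have hA : #|A| = (q ^ n - 1)%N.
    have -> : A = [set~ 0] by apply/setP => x; rewrite !inE.
    by rewrite cardsC1 hK subn1.
  pose Fnz := [set x : K | (sigma x == x) && (x != 0)].
  have hF : #|Fnz| = (q - 1)%N.
    rewrite -hq (cardsD1 0 [set x : K | sigma x == x]) inE rmorph0 eqxx add1n subn1 /=.
    by apply: eq_card => x; rewrite !inE andbC.
  pose r := fun T => odflt 0 [pick d in A | g d == T].
  have rP : forall c, c \in A -> r (g c) \in A /\ g (r (g c)) = g c.
    move=> c hc; rewrite /r; case: pickP => [d /andP [dA /eqP gd] | none] /=.
      by split.
    by have := none c; rewrite hc eqxx.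
  pose h := fun c => (g c, c / r (g c)).
  have hinj : {in A &, injective h}.
    move=> c1 c2 h1 h2 E.
    have e1 : g c1 = g c2 := congr1 fst E.
    have e2 : c1 / r (g c1) = c2 / r (g c2) := congr1 snd E.
    have e3 := congr1 r e1.
    have [rA _] := rP c1 h1; move: rA; rewrite inE => rA.
    apply: (mulIf (invr_neq0 rA)).
    exact: (etrans e2 (congr1 (fun z => c2 / z) (esym e3))).
  have sub : h @: A \subset setX (g @: A) Fnz.
    apply/subsetP => p /imsetP [c hc ->]; rewrite inE /= (imset_f _ hc) /=.
    have [rA rg] := rP c hc.
    move: (hc) rA; rewrite !inE => hc' rA.
    rewrite mulf_neq0 ?invr_neq0 // andbT; apply/eqP.
    exact: (@Tmid_eq K sigma m f hf m_gt0 c (r (g c)) hm2 hc' rA (esym rg)).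
  have := subset_leq_card sub; rewrite cardsX hF (card_in_imset hinj) hA => hle.
  case hq1: (q - 1)%N => [|k]; first by rewrite divn0.
  rewrite hq1 in hle.
  by apply: leq_trans (leq_div2r _ hle) _; rewrite mulnK.
- move=> T; rewrite mem_enum => /imsetP [c]; rewrite inE => hc ->.
  split.
  + by exists (mkL K m m_gt0 c).
  + exact: (@Tmid_inn K sigma m f hf m_gt0 c hc).
  + apply: (@Tmid_aut K sigma m f hf m_gt0 c hc (nuc c hc)).
    by apply: nuc; rewrite invr_neq0.
Qed.
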